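(* Let $d$, $a$, $b$ be positive real numbers. Each of the following sets $S$ satisfies $|S+S|\le |S-S|$ (i.e. is not sum-dominant): $S_1=(0\mid d,d,2d,a,b)$ where additionally $a+b=d$; $S_2=(0\mid d,d,2d,d,a)$; $S_3=(0\mid d,d,2d,a,d)$; $S_4=(0\mid 2d,d,d,a,2d)$; $S_5=(0\mid a,b,b,a,a)$; $S_6=(0\mid a+b,a,a,b,a+b)$; $S_7=(0\mid a+b,a,a,b,a)$; $S_8=(0\mid a,2a,a,a,b)$; $S_9=(0\mid a+b,a,a+b,a,b)$; $S_{10}=(0\mid a+b,2a+b,a+b,a,b)$; $S_{11}=(0\mid a,b,a,a+b,a)$; $S_{12}=(0\mid a,b,a+b,a,a)$; $S_{13}=(0\mid 2a+b,a,a,b,a)$; $S_{14}=(0\mid a+b,a,a,b,2a)$; $S_{15}=(0\mid a,a+b,a,b,a)$.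
   Context: Notation: for a real number $m$ and positive reals $c_1,\dots,c_5$, $(m\mid c_1,c_2,c_3,c_4,c_5)$ denotes the set $\{m,\ m+c_1,\ m+c_1+c_2,\ m+c_1+c_2+c_3,\ m+c_1+\cdots+c_4,\ m+c_1+\cdots+c_5\}$, i.e. the set whose consecutive elements in increasing order differ by $c_1,\dots,c_5$. For a finite set $S$ of reals, $S+S=\{x+y: x,y\in S\}$, $S-S=\{x-y: x,y\in S\}$, and $S$ is sum-dominant if $|S+S|>|S-S|$. *)

(* Defs.v *)
From HB Require Import structures.
From mathcomp Require Import all_boot all_order all_algebra.
From mathcomp Require Import reals.
Set Implicit Arguments. Unset Strict Implicit. Unset Printing Implicit Defensive.
Import Order.TTheory GRing.Theory Num.Theory.
Local Open Scope ring_scope.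

(* (m | c1,c2,c3,c4,c5): the set with minimum m and consecutive gaps c1..c5,
   listed as a sequence of its elements. *)
Definition gapset (R : realType) (m c1 c2 c3 c4 c5 : R) : seq R :=
  [:: m; m + c1; m + c1 + c2; m + c1 + c2 + c3; m + c1 + c2 + c3 + c4;
      m + c1 + c2 + c3 + c4 + c5].

(* S + S and S - S, as duplicate-free sequences (so size = cardinality). *)
Definition sumset (R : realType) (S : seq R) : seq R :=
  undup [seq x + y | x <- S, y <- S].
Definition diffset (R : realType) (S : seq R) : seq R :=
  undup [seq x - y | x <- S, y <- S].

Definition not_sum_dominant (R : realType) (S : seq R) : Prop :=
  (size (sumset S) <= size (diffset S))%N.

(* Main.v *)
Require Import Defs.
From HB Require Import structures.
From mathcomp Require Import all_boot all_order all_algebra.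
From mathcomp Require Import reals.
From mathcomp Require Import ring lra.
Import Order.TTheory GRing.Theory Num.Theory.
Local Open Scope ring_scope.

Definition pt := (int * int)%type.
Definition psum (P : seq pt) : seq pt := [seq (x.1 + y.1, x.2 + y.2) | x <- P, y <- P].
Definition pdiff (P : seq pt) : seq pt := [seq (x.1 - y.1, x.2 - y.2) | x <- P, y <- P].
Definition cands (L : seq pt) : seq pt := [seq (y.2 - x.2, x.1 - y.1) | x <- L, y <- L].
Definition ev (rs : pt) (p : pt) : int := p.1 * rs.1 + p.2 * rs.2.
Definition check (P : seq pt) : bool :=
  let Ls := psum P in let Ld := pdiff P in
  (size (undup Ls) <= size (undup Ld))%N &&
  all (fun rs => (rs.1 * rs.2 <= 0) ||
        (size (undup (map (ev rs) Ls)) <= size (undup (map (ev rs) Ld)))%N)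
     (cands (undup Ls) ++ cands (undup Ld)).


Definition F {R : realType} (u v : R) (p : pt) : R := p.1%:~R * u + p.2%:~R * v.

Lemma allpairs_F (R : realType) (u v : R) (P Q : seq pt) :
  [seq x + y | x <- map (F u v) P, y <- map (F u v) Q] =
  map (F u v) [seq (x.1 + y.1, x.2 + y.2) | x <- P, y <- Q].
Proof.
elim: P => //= p P IH; rewrite map_cat IH; congr (_ ++ _).
rewrite -!map_comp; apply: eq_map => q /=; rewrite /F /= !intrD; ring.
Qed.

Lemma allpairs_Fd (R : realType) (u v : R) (P Q : seq pt) :
  [seq x - y | x <- map (F u v) P, y <- map (F u v) Q] =
  map (F u v) [seq (x.1 - y.1, x.2 - y.2) | x <- P, y <- Q].
Proof.
elim: P => //= p P IH; rewrite map_cat IH; congr (_ ++ _).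
rewrite -!map_comp; apply: eq_map => q /=; rewrite /F /= !intrB; ring.
Qed.

Lemma size_undup_ker (T1 T2 T3 : eqType) (f : T1 -> T2) (g : T1 -> T3) (L : seq T1) :
  {in L &, forall x y, (f x == f y) = (g x == g y)} ->
  size (undup (map f L)) = size (undup (map g L)).
Proof.
elim: L => //= x L IH H.
have H' : {in L &, forall x y, (f x == f y) = (g x == g y)}.
  by move=> y z hy hz; apply: H; rewrite inE ?hy ?hz orbT.
have -> : (f x \in map f L) = (g x \in map g L).
  apply/mapP/mapP => -[y hy e]; exists y => //; apply/eqP.
    have hy' : y \in x :: L by rewrite inE hy orbT.
    by have := H x y (mem_head _ _) hy'; rewrite e eqxx => /esym h; exact: h.
  have hy' : y \in x :: L by rewrite inE hy orbT.
  by have := H x y (mem_head _ _) hy'; rewrite e eqxx => h; exact: h.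
by case: ifP => _ /=; rewrite IH.
Qed.

Arguments size_undup_ker {T1 T2 T3 f g L}.

Definition injb {R : realType} (u v : R) (L : seq pt) :=
  all (fun x => all (fun y => (F u v x == F u v y) ==> (x == y)) L) L.

Lemma ker_rs (R : realType) (u v : R) (rs : pt) : 0 < v -> rs.2 != 0 ->
  rs.2%:~R * u = rs.1%:~R * v ->
  forall p q, (F u v p == F u v q) = (ev rs p == ev rs q).
Proof.
move=> hv hs e p q.
have key : forall p, rs.2%:~R * F u v p = v * (ev rs p)%:~R.
  move=> p'; rewrite /F /ev intrD !intrM.
  have -> : rs.2%:~R * (p'.1%:~R * u + p'.2%:~R * v) =
            p'.1%:~R * (rs.2%:~R * u) + p'.2%:~R * rs.2%:~R * v :> R by ring.
  rewrite e; ring.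
have hs' : (rs.2%:~R : R) != 0 by rewrite intr_eq0.
rewrite -(inj_eq (mulfI hs')) !key (inj_eq (mulfI (lt0r_neq0 hv))) eqr_int.
by [].
Qed.

Lemma find_rs (R : realType) (u v : R) (L : seq pt) : 0 < u -> 0 < v ->
  ~~ injb u v L -> exists2 rs, rs \in cands (undup L) &
  [/\ rs.2 != 0, 0 < rs.1 * rs.2 & rs.2%:~R * u = rs.1%:~R * v].
Proof.
move=> hu hv /allPn[x hx /allPn[y hy]]; rewrite negb_imply => /andP[/eqP e nxy].
exists (y.2 - x.2, x.1 - y.1).
  by apply: (allpairs_f (fun x y => (y.2 - x.2, x.1 - y.1))); rewrite mem_undup.
have e2 : (x.1 - y.1)%:~R * u = (y.2 - x.2)%:~R * v :> R.
  move: e; rewrite /F !intrB => e; rewrite mulrBl mulrBl; lra.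
have hs : x.1 - y.1 != 0.
  apply/negP => /eqP h0; move: e2; rewrite h0 mul0r => /esym/eqP.
  rewrite mulf_eq0 (gt_eqF hv) orbF intr_eq0 subr_eq0 => /eqP h2.
  move: h0 => /eqP; rewrite subr_eq0 => /eqP h1.
  by move: nxy; case: x y h1 h2 {e hx hy} => [x1 x2] [y1 y2] /= -> ->; rewrite eqxx.
split=> //=.
have : (0 : R) < ((y.2 - x.2) * (x.1 - y.1))%:~R.
  have hs' : (0 : R) < (x.1 - y.1)%:~R ^+ 2 by rewrite lt_def sqrf_eq0 intr_eq0 hs sqr_ge0.
  rewrite intrM; have h3 : 0 < (x.1 - y.1)%:~R ^+ 2 * u :> R by apply: mulr_gt0.
  have : (x.1 - y.1)%:~R ^+ 2 * u = ((y.2 - x.2)%:~R * (x.1 - y.1)%:~R) * v :> R.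
    by rewrite expr2 -mulrA e2; ring.
  move=> h4; rewrite h4 in h3; rewrite pmulr_lgt0 // in h3.
by rewrite ltr0z.
Qed.

Arguments find_rs {R u v L}.
Arguments ker_rs {R u v rs}.

Lemma main (R : realType) (u v : R) (P : seq pt) : 0 < u -> 0 < v -> check P ->
  not_sum_dominant (map (F u v) P).
Proof.
move=> hu hv /andP[hgen /allP hall].
rewrite /not_sum_dominant /sumset /diffset allpairs_F allpairs_Fd.
rewrite -/(psum P) -/(pdiff P).
case hs: (injb u v (psum P)); case hd: (injb u v (pdiff P)).
- have K : forall L, injb u v L -> {in L &, forall x y, (F u v x == F u v y) = (id x == id y)}.
    move=> L /allP hL x y hx hy; apply/idP/idP => [h|/eqP -> //].
    by have := allP (hL x hx) y hy; rewrite h.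
  rewrite (size_undup_ker (K _ hs)) (size_undup_ker (K _ hd)) !map_id; exact: hgen.
all: have Ex : ~~ injb u v (psum P) || ~~ injb u v (pdiff P) by rewrite hs hd.
all: have [rs hrs [h1 h2 h3]] : exists2 rs, rs \in cands (undup (psum P)) ++ cands (undup (pdiff P)) &
  [/\ rs.2 != 0, 0 < rs.1 * rs.2 & rs.2%:~R * u = rs.1%:~R * v] by
  case/orP: Ex => /(find_rs hu hv) [rs hrs X]; exists rs => //; rewrite mem_cat hrs ?orbT.
all: have := hall rs hrs; rewrite leNgt h2 /=.
all: by rewrite (size_undup_ker (fun x y _ _ => ker_rs hv h1 h3 x y))
            (size_undup_ker (fun x y _ _ => ker_rs hv h1 h3 x y)).
Qed.
Definition P1 : seq pt := [:: (0,0); (1,1); (2,2); (4,4); (5,4); (5,5)].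
Definition P2 : seq pt := [:: (0,0); (1,0); (2,0); (4,0); (5,0); (5,1)].
Definition P3 : seq pt := [:: (0,0); (1,0); (2,0); (4,0); (4,1); (5,1)].
Definition P4 : seq pt := [:: (0,0); (2,0); (3,0); (4,0); (4,1); (6,1)].
Definition P5 : seq pt := [:: (0,0); (1,0); (1,1); (1,2); (2,2); (3,2)].
Definition P6 : seq pt := [:: (0,0); (1,1); (2,1); (3,1); (3,2); (4,3)].
Definition P7 : seq pt := [:: (0,0); (1,1); (2,1); (3,1); (3,2); (4,2)].
Definition P8 : seq pt := [:: (0,0); (1,0); (3,0); (4,0); (5,0); (5,1)].
Definition P9 : seq pt := [:: (0,0); (1,1); (2,1); (3,2); (4,2); (4,3)].
Definition P10 : seq pt := [:: (0,0); (1,1); (3,2); (4,3); (5,3); (5,4)].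
Definition P11 : seq pt := [:: (0,0); (1,0); (1,1); (2,1); (3,2); (4,2)].
Definition P12 : seq pt := [:: (0,0); (1,0); (1,1); (2,2); (3,2); (4,2)].
Definition P13 : seq pt := [:: (0,0); (2,1); (3,1); (4,1); (4,2); (5,2)].
Definition P14 : seq pt := [:: (0,0); (1,1); (2,1); (3,1); (3,2); (5,2)].
Definition P15 : seq pt := [:: (0,0); (1,0); (2,1); (3,1); (3,2); (4,2)].
Lemma checks : [&& check P1, check P2, check P3, check P4, check P5, check P6, check P7, check P8, check P9, check P10, check P11, check P12, check P13, check P14 & check P15].
Proof. vm_compute. reflexivity. Qed.

Lemma cons_eq (T : Type) (x y : T) l l' : x = y -> l = l' -> x :: l = y :: l'.
Proof. by move=> -> ->. Qed.

Ltac gs_tac := rewrite /gapset /F /=; repeat (apply: cons_eq; first by ring).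

Theorem lemma7 (R : realType) (d a b : R) (hd : 0 < d) (ha : 0 < a) (hb : 0 < b) :
  (a + b = d -> not_sum_dominant (gapset 0 d d (2 * d) a b)) /\
  not_sum_dominant (gapset 0 d d (2 * d) d a) /\
  not_sum_dominant (gapset 0 d d (2 * d) a d) /\
  not_sum_dominant (gapset 0 (2 * d) d d a (2 * d)) /\
  not_sum_dominant (gapset 0 a b b a a) /\
  not_sum_dominant (gapset 0 (a + b) a a b (a + b)) /\
  not_sum_dominant (gapset 0 (a + b) a a b a) /\
  not_sum_dominant (gapset 0 a (2 * a) a a b) /\
  not_sum_dominant (gapset 0 (a + b) a (a + b) a b) /\
  not_sum_dominant (gapset 0 (a + b) (2 * a + b) (a + b) a b) /\
  not_sum_dominant (gapset 0 a b a (a + b) a) /\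
  not_sum_dominant (gapset 0 a b (a + b) a a) /\
  not_sum_dominant (gapset 0 (2 * a + b) a a b a) /\
  not_sum_dominant (gapset 0 (a + b) a a b (2 * a)) /\
  not_sum_dominant (gapset 0 a (a + b) a b a).
Proof.
case/and5P: checks => c1 c2 c3 c4 /and5P[c5 c6 c7 c8 /and5P[c9 c10 c11 c12 /and3P[c13 c14 c15]]].
split; [move=> <-|].
  have -> : gapset 0 (a + b) (a + b) (2 * (a + b)) a b = map (F a b) P1 by gs_tac.
  by apply: main.
split; [(have -> : gapset 0 d d (2 * d) d a = map (F d a) P2 by gs_tac); by apply: main|].
split; [(have -> : gapset 0 d d (2 * d) a d = map (F d a) P3 by gs_tac); by apply: main|].
split; [(have -> : gapset 0 (2 * d) d d a (2 * d) = map (F d a) P4 by gs_tac); by apply: main|].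
split; [(have -> : gapset 0 a b b a a = map (F a b) P5 by gs_tac); by apply: main|].
split; [(have -> : gapset 0 (a + b) a a b (a + b) = map (F a b) P6 by gs_tac); by apply: main|].
split; [(have -> : gapset 0 (a + b) a a b a = map (F a b) P7 by gs_tac); by apply: main|].
split; [(have -> : gapset 0 a (2 * a) a a b = map (F a b) P8 by gs_tac); by apply: main|].
split; [(have -> : gapset 0 (a + b) a (a + b) a b = map (F a b) P9 by gs_tac); by apply: main|].
split; [(have -> : gapset 0 (a + b) (2 * a + b) (a + b) a b = map (F a b) P10 by gs_tac); by apply: main|].
split; [(have -> : gapset 0 a b a (a + b) a = map (F a b) P11 by gs_tac); by apply: main|].
split; [(have -> : gapset 0 a b (a + b) a a = map (F a b) P12 by gs_tac); by apply: main|].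
split; [(have -> : gapset 0 (2 * a + b) a a b a = map (F a b) P13 by gs_tac); by apply: main|].
split; [(have -> : gapset 0 (a + b) a a b (2 * a) = map (F a b) P14 by gs_tac); by apply: main|].
have -> : gapset 0 a (a + b) a b a = map (F a b) P15 by gs_tac.
by apply: main.
Qed.
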